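(* Let $\alpha>d$ and $\kappa\ge0$ be integers with $\alpha>d-\kappa$, and let $\delta_\varepsilon=\varepsilon^{\frac{2\kappa+2\alpha}{2\kappa+2\alpha+d}}$. There is $a>0$ such that for all $M>1$, all $\varepsilon>0$ and all $F\in\mathrm{span}\{\Psi_{\mathcal O}\}$ with $\|F\|_{H^{\alpha-d/2}(\mathbb R^d)}\le M\delta_\varepsilon/\varepsilon$, there is a decomposition $F=F_1+F_2$ with $F_1,F_2\in\mathrm{span}\{\Psi_{\mathcal O}\}$, $\|F_1\|_{(H^\kappa(\mathbb R^d))^*}\le\delta_\varepsilon^3/\varepsilon^2$ and $\|F_2\|_{B^\alpha_{11}(\mathbb R^d)}\le aM^2\delta_\varepsilon^2/\varepsilon^2$.
   Context: $\mathcal O\subset\mathbb R^d$ nonempty bounded open with smooth boundary. $\Psi$ is an orthonormal basis of $L^2(\mathbb R^d)$ of compactly supported Daubechies wavelets of regularity $S>\alpha$; $\Psi_{\mathcal O}=\{\psi_{kl}:k\ge1,1\le l\le L_k\}$ are those whose supports meet $\mathcal O$, $L_k\simeq2^{dk}$; $\mathrm{span}\{\Psi_{\mathcal O}\}$ consists of $F=\sum_{k,l}F_{kl}\psi_{kl}$, $F_{kl}=\langle F,\psi_{kl}\rangle$. For such $F$ the norms are given by the wavelet characterisation $\|F\|_{B^s_{pq}(\mathbb R^d)}=\big(\sum_k2^{qk(s+d/2-d/p)}(\sum_l|F_{kl}|^p)^{q/p}\big)^{1/q}$; in particular $\|F\|^2_{H^{\alpha-d/2}(\mathbb R^d)}=\sum_k2^{(2\alpha-d)k}\sum_lF_{kl}^2$,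 $\|F\|^2_{(H^\kappa(\mathbb R^d))^*}=\|F\|^2_{H^{-\kappa}(\mathbb R^d)}=\sum_k2^{-2\kappa k}\sum_lF_{kl}^2$ and $\|F\|_{B^\alpha_{11}(\mathbb R^d)}=\sum_k2^{(\alpha-d/2)k}\sum_l|F_{kl}|$. *)

(* Defs.v *)
From HB Require Import structures.
From mathcomp Require Import all_boot all_order all_algebra.
From mathcomp Require Import all_classical all_reals all_analysis.
Set Implicit Arguments. Unset Strict Implicit. Unset Printing Implicit Defensive.
Import Order.TTheory GRing.Theory Num.Theory.
Local Open Scope ring_scope.

(* An element F of span{Psi_O} is represented by its wavelet coefficients
   F k l = <F, psi_kl>; the index set is {(k,l) : 1 <= k, 1 <= l <= L k}. *)
Definition coefs (R : realType) := nat -> nat -> R.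

Definition in_span (R : realType) (L : nat -> nat) (F : coefs R) : Prop :=
  forall k l, ~ [/\ (1 <= k)%N, (1 <= l)%N & (l <= L k)%N] -> F k l = 0.

Definition sqrte (R : realType) (x : \bar R) : \bar R :=
  match x with
  | EFin r => (Num.sqrt r)%:E
  | _ => +oo%E
  end.

(* ||F||_{H^{alpha - d/2}(R^d)} = (sum_k 2^{(2alpha-d)k} sum_l F_kl^2)^{1/2} *)
Definition H_norm (R : realType) (d alpha : nat) (L : nat -> nat) (F : coefs R)
  : \bar R :=
  sqrte (\sum_(1 <= k <oo)
     ((2 : R) `^ ((2 * alpha%:R - d%:R) * k%:R)
        * \sum_(1 <= l < (L k).+1) F k l ^+ 2)%:E)%E.

(* ||F||_{(H^kappa(R^d))^*} = ||F||_{H^{-kappa}} = (sum_k 2^{-2 kappa k} sum_l F_kl^2)^{1/2} *)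
Definition Hdual_norm (R : realType) (kappa : nat) (L : nat -> nat) (F : coefs R)
  : \bar R :=
  sqrte (\sum_(1 <= k <oo)
     ((2 : R) `^ (- (2 * kappa%:R) * k%:R)
        * \sum_(1 <= l < (L k).+1) F k l ^+ 2)%:E)%E.

(* ||F||_{B^alpha_{11}(R^d)} = sum_k 2^{(alpha - d/2)k} sum_l |F_kl| *)
Definition B11_norm (R : realType) (d alpha : nat) (L : nat -> nat) (F : coefs R)
  : \bar R :=
  (\sum_(1 <= k <oo)
     ((2 : R) `^ ((alpha%:R - d%:R / 2) * k%:R)
        * \sum_(1 <= l < (L k).+1) `|F k l|)%:E)%E.

Definition delta (R : realType) (d alpha kappa : nat) (eps : R) : R :=
  eps `^ ((2 * kappa%:R + 2 * alpha%:R) / (2 * kappa%:R + 2 * alpha%:R + d%:R)).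

(* Main.v *)
Require Import Defs.
From HB Require Import structures.
From mathcomp Require Import all_boot all_order all_algebra.
From mathcomp Require Import all_classical all_reals all_analysis.
From mathcomp Require Import ring lra zify.
Import Order.TTheory GRing.Theory Num.Theory.
Local Open Scope ring_scope.

Lemma sqrte_le1 (R : realType) (s : \bar R) (b : R) :
  (0 <= s)%E -> 0 <= b -> (Defs.sqrte s <= b%:E)%E -> (s <= (b ^+ 2)%:E)%E.
Proof.
case: s => [r| |] //= r0 b0; rewrite ?lee_fin // => h.
by rewrite -(sqr_sqrtr r0) lerXn2r // ?nnegrE ?sqrtr_ge0.
Qed.

Lemma sqrte_le2 (R : realType) (s : \bar R) (b : R) :
  (0 <= s)%E -> 0 <= b -> (s <= (b ^+ 2)%:E)%E -> (Defs.sqrte s <= b%:E)%E.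
Proof.
case: s => [r| |] //= _ b0; rewrite ?lee_fin // => h.
by rewrite -(ger0_norm b0) -sqrtr_sqr ler_sqrt // sqr_ge0.
Qed.

Lemma amgm (R : realType) (w f : R) : 0 <= w -> w * `|f| <= (w ^+ 2 * f ^+ 2 + 1) / 2.
Proof.
move=> w0; have : 0 <= (w * `|f| - 1) ^+ 2 by apply: sqr_ge0.
rewrite -[f ^+ 2]real_normK ?num_real //; nra.
Qed.

Lemma pow2_nat (R : realType) (m k : nat) :
  (2 : R) `^ (m%:R * k%:R) = 2 ^+ (m * k).
Proof. by rewrite -natrM powR_mulrn. Qed.

Lemma hk (R : realType) (d a k : nat) : (d <= 2 * a)%N ->
  (2:R) `^ ((2 * a%:R - d%:R) * k%:R) = 2 ^+ ((2 * a - d) * k).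
Proof. by move=> h; rewrite -pow2_nat natrB // natrM. Qed.

Lemma gk (R : realType) (c k : nat) :
  (2:R) `^ (- (2 * c%:R) * k%:R) = (2 ^+ (2 * c * k))^-1.
Proof. by rewrite mulNr powRN -natrM -pow2_nat natrM. Qed.

Lemma wk (R : realType) (d a k : nat) :
  (2:R) `^ ((a%:R - d%:R / 2) * k%:R) ^+ 2 = (2:R) `^ ((2 * a%:R - d%:R) * k%:R).
Proof.
rewrite expr2 -powRD; last by apply/implyP => _.
have -> : (a%:R - d%:R / 2) * k%:R + (a%:R - d%:R / 2) * k%:R = (2 * a%:R - d%:R) * k%:R :> R.
  rewrite -mulrDl; congr (_ * _).
  set u := a%:R; set v := d%:R; lra.
by [].
Qed.

Lemma keyJ (R : realFieldType) (M x y T : R) (d n : nat) :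
  1 <= M -> 0 < x -> 0 < y -> 0 <= T -> (d <= n)%N -> (0 < d)%N ->
  y ^+ d * x ^+ n = 1 -> T ^+ n < (M ^+ 2 / y ^+ 2) -> T ^+ d <= M ^+ 2 * x ^+ 2.
Proof.
move=> M1 x0 y0 T0 dn d0 yx TQ; rewrite leNgt; apply/negP => H.
have n0 : (0 < n)%N by apply: leq_trans dn.
have H1 : (M ^+ 2 * x ^+ 2) ^+ n < (T ^+ d) ^+ n.
  by rewrite ltrXn2r ?lt0n_neq0 // mulr_ge0 // sqr_ge0.
have H2 : (T ^+ n) ^+ d < (M ^+ 2 / y ^+ 2) ^+ d.
  by rewrite ltrXn2r ?lt0n_neq0 // exprn_ge0.
rewrite -!exprM mulnC !exprM in H1 H2.
have := lt_trans H1 H2.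
have -> : (M^+2 * x^+2)^+n = (M^+n)^+2 * (x^+n)^+2 by rewrite exprMn -!exprM !(mulnC 2).
have -> : (M^+2 / y^+2)^+d = (M^+d)^+2 / (y^+d)^+2 by rewrite expr_div_n -!exprM !(mulnC 2).
set P := M ^+ n; set Q := M ^+ d; set u := x ^+ n; set v := y ^+ d.
have QP : Q <= P by apply: ler_weXn2l.
have Q0 : 0 < Q by apply: exprn_gt0; lra.
have u0 : 0 < u by apply: exprn_gt0.
have v0 : 0 < v by apply: exprn_gt0.
have -> : v = u^-1 by apply: (mulIf (lt0r_neq0 u0)); rewrite yx mulVf // lt0r_neq0.
rewrite exprVn invrK => h.
have : P ^+ 2 < Q ^+ 2 by rewrite -(ltr_pM2r (exprn_gt0 2 u0)).
move=> hh; have : Q^+2 <= P^+2.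
  by rewrite lerXn2r // nnegrE ?ltW // (lt_le_trans Q0 QP).
lra.
Qed.

From mathcomp Require Import zify.
Lemma ident (R : realType) (d a c : nat) (eps : R) : 0 < eps -> (0 < d)%N ->
  (d <= 2*c + 2*a)%N ->
  (delta d a c eps ^+ 2 / eps) ^+ d * (delta d a c eps / eps) ^+ (2*c+2*a-d) = 1.
Proof.
move=> e0 d0 dle; set D := delta d a c eps.
have e : D ^+ (2*c+2*a + d) = eps ^+ (2*c+2*a).
  rewrite /D /delta -powR_mulrn ?powR_ge0 // -powRrM -powR_mulrn ?ltW //.
  congr (_ `^ _); rewrite -[2 * c%:R]natrM -[2 * a%:R]natrM -!natrD divfK // pnatr_eq0; lia.
rewrite !expr_div_n -exprM mulf_div -!exprD.
rewrite (_ : (2 * d + (2*c+2*a-d) = 2*c+2*a+d)%N); last by lia.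
rewrite (_ : (d + (2*c+2*a-d) = 2*c+2*a)%N); last by lia.
by rewrite e divff // expf_neq0 // lt0r_neq0.
Qed.

Lemma geom (R : realType) (d J : nat) : (0 < d)%N ->
  \sum_(1 <= k < J.+1) (2:R) ^+ (d * k) <= 2 * 2 ^+ (d * J).
Proof.
move=> d0; elim: J => [|J IH]; first by rewrite big_geq // mulr_ge0.
rewrite big_nat_recr //=.
have : 2 * 2 ^+ (d * J) <= (2:R) ^+ (d * J.+1).
  rewrite mulnS exprD ler_pM2r ?exprn_gt0 //.
  by have := @ler_weXn2l R 2 (ler1n R 2) 1 d; rewrite expr1; apply.
lra.
Qed.

Theorem lemmaB3 (R : realType) (d alpha kappa : nat) (L : nat -> nat)
  (hd : (1 <= d)%N) (halpha : (d < alpha)%N) (hak : (d < alpha + kappa)%N)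
  (hL : exists c1 c2 : R, [/\ 0 < c1, 0 < c2 &
          forall k : nat, (1 <= k)%N ->
            c1 * 2 ^+ (d * k) <= (L k)%:R /\ (L k)%:R <= c2 * 2 ^+ (d * k)]) :
  exists a : R, 0 < a /\
    forall (M eps : R) (F : coefs R), 1 < M -> 0 < eps -> in_span L F ->
      (H_norm d alpha L F <= (M * delta d alpha kappa eps / eps)%:E)%E ->
      exists F1 F2 : coefs R,
        [/\ in_span L F1, in_span L F2,
            (forall k l, F k l = F1 k l + F2 k l),
            (Hdual_norm kappa L F1 <=
               (delta d alpha kappa eps ^+ 3 / eps ^+ 2)%:E)%E &
            (B11_norm d alpha L F2 <=
               (a * M ^+ 2 * delta d alpha kappa eps ^+ 2 / eps ^+ 2)%:E)%E].
Proof.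
have d2a : (d <= 2 * alpha)%N by lia.
have dnn : (d <= 2 * kappa + 2 * alpha - d)%N by lia.
have nnE : (2*alpha - d + 2*kappa = 2 * kappa + 2 * alpha - d)%N by lia.
have nn0 : (0 < 2 * kappa + 2 * alpha - d)%N by lia.
have dle : (d <= 2 * kappa + 2 * alpha)%N by lia.
case: hL => c1 [c2 [c10 c20 hL]].
exists (1 + c2); split; first lra.
move=> M eps F M1 e0 hF hH.
set D := delta d alpha kappa eps.
have D0 : 0 < D by apply: powR_gt0.
set x := D / eps; set y := D ^+ 2 / eps.
have x0 : 0 < x by apply: divr_gt0.
have y0 : 0 < y by apply: divr_gt0 => //; apply: exprn_gt0.
set nn := (2 * kappa + 2 * alpha - d)%N.
set Q := M ^+ 2 / y ^+ 2.
have exJ : exists J, Q <= 2 ^+ (nn * J.+1).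
  exists (Num.Def.archi_bound Q); apply/ltW/upper_nthrootP.
  apply: leq_trans (leqnSn _) _; exact: leq_pmull.
have [J hJ hJmin] := ex_minnP exJ.
set S := (\sum_(1 <= k <oo)
     ((2 : R) `^ ((2 * alpha%:R - d%:R) * k%:R)
        * \sum_(1 <= l < (L k).+1) F k l ^+ 2)%:E)%E.
have S0 : (0 <= S)%E.
  apply: nneseries_ge0 => k _ _; rewrite lee_fin mulr_ge0 ?powR_ge0 //.
  by rewrite sumr_ge0 // => i _; rewrite sqr_ge0.
have hS := @sqrte_le1 R S (M * x) S0 (ltW (mulr_gt0 (lt_trans ltr01 M1) x0)).
move: hH; rewrite /H_norm -/S -/D -mulrA -/x => hH; have {}hS := hS hH.
have [r Sr] : exists r, S = r%:E.
  clear hH; move: S0 hS; case: (S) => [r _ _| |] //; by exists r.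
rewrite Sr lee_fin in hS.
have r0 : 0 <= r by rewrite -lee_fin -Sr.
pose F1 : coefs R := fun k l => if (J < k)%N then F k l else 0.
pose F2 : coefs R := fun k l => if (k <= J)%N then F k l else 0.
exists F1, F2; split.
- by move=> k l h; rewrite /F1 hF // if_same.
- by move=> k l h; rewrite /F2 hF // if_same.
- by move=> k l; rewrite /F1 /F2; case: ltnP => _; rewrite ?add0r ?addr0.
- rewrite /Hdual_norm; apply: sqrte_le2.
    apply: nneseries_ge0 => k _ _; rewrite lee_fin mulr_ge0 ?powR_ge0 //.
    by rewrite sumr_ge0 // => i _; rewrite sqr_ge0.
    by rewrite divr_ge0 // exprn_ge0 // ltW.
  set P := (2:R) ^+ (nn * J.+1).
  have P0 : 0 < P by apply: exprn_gt0.
  apply: (@le_trans _ _ ((P^-1)%:E * S)%E).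
    rewrite -nneseriesZl; last first.
      move=> k _; rewrite lee_fin mulr_ge0 ?powR_ge0 //.
      by rewrite sumr_ge0 // => i _; rewrite sqr_ge0.
    apply: lee_nneseries.
      move=> k _ _; rewrite lee_fin mulr_ge0 ?powR_ge0 //.
      by rewrite sumr_ge0 // => i _; rewrite sqr_ge0.
    move=> k _; rewrite -EFinM lee_fin.
    have A0 : 0 <= \sum_(1 <= l < (L k).+1) F k l ^+ 2.
      by rewrite sumr_ge0 // => i _; rewrite sqr_ge0.
    case: (ltnP J k) => Jk.
      rewrite (eq_bigr (fun l => F k l ^+ 2)); last by move=> l _; rewrite /F1 Jk.
      rewrite mulrA ler_wpM2r //.
      rewrite gk hk //.
      set H := (2:R) ^+ _; set G := (2:R) ^+ _.
      have H0 : 0 < H by apply: exprn_gt0.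
      have G0 : 0 < G by apply: exprn_gt0.
      have PHG : P <= H * G.
        rewrite /H /G -exprD; apply: ler_weXn2l; first by rewrite ler1n.
        apply: (@leq_trans (nn * k)); first by rewrite leq_mul2l Jk orbT.
        by rewrite -mulnDl nnE.
      have -> : G^-1 = H * (H * G)^-1 by rewrite invfM mulVKf // gt_eqF.
      rewrite [P^-1 * H]mulrC; apply: ler_wpM2l; first exact: ltW.
      by rewrite lef_pV2 // posrE mulr_gt0.
    rewrite big1 ?mulr0; last by move=> l _; rewrite /F1 ltnNge Jk /= expr0n.
    apply: mulr_ge0; first by rewrite invr_ge0 ltW.
    by apply: mulr_ge0 => //; exact: powR_ge0.
  rewrite Sr -EFinM lee_fin.
  have Q0 : 0 < Q by rewrite divr_gt0 // exprn_gt0 // (lt_trans ltr01 M1).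
  apply: le_trans (_ : Q^-1 * r <= _).
    by rewrite ler_wpM2r // lef_pV2.
  apply: le_trans (_ : Q^-1 * (M * x) ^+ 2 <= _).
    by rewrite ler_wpM2l // invr_ge0 ltW.
  rewrite le_eqVlt; apply/orP; left; apply/eqP.
  rewrite /Q /x /y; field.
  by apply/and3P; split; apply: lt0r_neq0 => //; lra.
- rewrite /B11_norm.
  set w := fun k : nat => (2:R) `^ ((alpha%:R - d%:R / 2) * k%:R).
  set h := fun k : nat => (2:R) `^ ((2 * alpha%:R - d%:R) * k%:R).
  set A := fun k : nat => \sum_(1 <= l < (L k).+1) F k l ^+ 2.
  have A0 : forall k, 0 <= A k by move=> k; rewrite sumr_ge0 // => i _; rewrite sqr_ge0.
  set e := fun k : nat => if (k <= J)%N then (L k)%:R / 2 else 0 : R.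
  have e0' : forall k, 0 <= e k by move=> k; rewrite /e; case: ifP => // _; rewrite divr_ge0.
  apply: (@le_trans _ _ (\sum_(1 <= k <oo) ((h k * A k) / 2)%:E +
                          \sum_(1 <= k <oo) (e k)%:E)%E).
    rewrite -nneseriesD; last 2 first.
    - by move=> k _ _; rewrite lee_fin divr_ge0 // mulr_ge0 // powR_ge0.
    - by move=> k _ _; rewrite lee_fin.
    apply: lee_nneseries.
      move=> k _ _; rewrite lee_fin mulr_ge0 ?powR_ge0 //.
      by rewrite sumr_ge0 // => i _.
    move=> k _; rewrite -EFinD lee_fin /e.
    case: (leqP k J) => kJ.
      rewrite (eq_bigr (fun l => `|F k l|)); last by move=> l _; rewrite /F2 kJ.
      rewrite mulr_sumr.
      apply: le_trans (_ : \sum_(1 <= l < (L k).+1) (w k ^+ 2 * F k l ^+ 2 + 1) / 2 <= _).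
        by apply: ler_sum => l _; apply: amgm; apply: powR_ge0.
      rewrite -mulr_suml big_split /= -mulr_sumr sumr_const_nat subn1 /=.
      by rewrite /w wk -/(h k) -/(A k) mulrDl.
    rewrite big1 ?mulr0; last by move=> l _; rewrite /F2 leqNgt kJ /= normr0.
    by rewrite addr0 divr_ge0 // mulr_ge0 // powR_ge0.
  have E1 : (\sum_(1 <= k <oo) ((h k * A k) / 2)%:E = (2^-1)%:E * r%:E)%E.
    rewrite -Sr -nneseriesZl; last first.
      move=> k _; rewrite lee_fin mulr_ge0 ?powR_ge0 //.
      by rewrite sumr_ge0 // => i _; rewrite sqr_ge0.
    by apply: eq_eseriesr => k _; rewrite -EFinM mulrC.
  have E2 : (\sum_(1 <= k <oo) (e k)%:E = (\sum_(1 <= k < J.+1) e k)%:E)%E.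
    rewrite (nneseries_split _ J); last by move=> k _; rewrite lee_fin.
    rewrite eseries0 ?adde0; first by rewrite sumEFin add1n.
    by move=> k; rewrite add1n => Jk _; rewrite /e leqNgt Jk.
  rewrite E1 E2 -EFinM -EFinD lee_fin.
  set Z := M ^+ 2 * D ^+ 2 / eps ^+ 2.
  have hr : r <= Z by move: hS; rewrite /x exprMn expr_div_n mulrA.
  have Z0 : 0 <= Z by apply: le_trans hr.
  have hE : \sum_(1 <= k < J.+1) e k <= c2 * Z.
    case: (posnP J) => [J0|Jpos].
      by rewrite J0 big_geq // mulr_ge0 // ltW.
    rewrite (eq_big_nat _ _ (F2 := fun k => (L k)%:R / 2)); last first.
      by move=> k /andP[_ kJ]; rewrite /e -ltnS kJ.
    apply: le_trans (_ : \sum_(1 <= k < J.+1) (c2 * 2 ^+ (d * k)) / 2 <= _).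
      apply: ler_sum_nat => k /andP[k1 _]; rewrite ler_pM2r //.
      by case: (hL k k1).
    rewrite -mulr_suml -mulr_sumr.
    apply: le_trans (_ : c2 * (2 * 2 ^+ (d * J)) / 2 <= _).
      by rewrite ler_pM2r // ler_pM2l // geom.
    have -> : c2 * (2 * 2 ^+ (d * J)) / 2 = c2 * 2 ^+ (d * J) :> R by field.
    rewrite ler_pM2l //.
    have hq : (2:R) ^+ J ^+ nn < Q.
      rewrite -exprM mulnC ltNge; apply/negP => hq.
      have := hJmin J.-1; rewrite prednK // => /(_ hq).
      by rewrite leqNgt ltn_predL Jpos.
    have := @keyJ R M x y (2 ^+ J) d nn (ltW M1) x0 y0 (exprn_ge0 _ (ler0n _ 2)) dnn hd
      (@ident R d alpha kappa eps e0 hd dle) hq.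
    by rewrite -exprM mulnC /x expr_div_n mulrA.
  have -> : (1 + c2) * M ^+ 2 * D ^+ 2 / eps ^+ 2 = (1 + c2) * Z by rewrite /Z !mulrA.
  move: hE; set s := \sum_(1 <= k < J.+1) e k => hE.
  have : 0 <= 2^-1 :> R by rewrite invr_ge0.
  nra.
Qed.
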